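(* Let $p$ be a prime and $q$ a power of $p$. For every integer $m \ge p$ and every $d \in \mathbb{F}_q$, there exists a monic polynomial $f \in \mathbb{F}_q[x]$ of degree $m$ with $\operatorname{disc}(f) = d$.
   Context: For $f$ of degree $m\ge 2$ with leading coefficient $a_m$ and roots $\alpha_1,\dots,\alpha_m$ in a splitting field, $\operatorname{disc}(f) = a_m^{2m-2}\prod_{i<j}(\alpha_i-\alpha_j)^2$; for linear $f$, $\operatorname{disc}(f) = 1$. *)

(* Defs.v *)
From HB Require Import structures.
From mathcomp Require Import all_boot all_order all_algebra all_field.
Set Implicit Arguments. Unset Strict Implicit. Unset Printing Implicit Defensive.
Import GRing.Theory.
Local Open Scope ring_scope.

(* For linear f, disc f = 1. *)
Definition disc_roots (L : fieldType) (a : L) (rs : seq L) : L :=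
  a ^+ (2 * (size rs) - 2) *
  \prod_(i < size rs) \prod_(j < size rs | (i < j)%N) (rs`_i - rs`_j) ^+ 2.

Definition is_disc (F : fieldType) (f : {poly F}) (d : F) : Prop :=
  if size f == 2%N then d = 1
  else exists (L : fieldExtType F) (rs : seq L),
    map_poly (in_alg L) f = (lead_coef f)%:A%:P * \prod_(r <- rs) ('X - r%:P)
    /\ d%:A = disc_roots (lead_coef f)%:A rs.

(* Main.v *)
Require Import Defs.
From HB Require Import structures.
From mathcomp Require Import all_boot all_order all_algebra all_field.
From mathcomp Require Import ring zify.
Set Implicit Arguments. Unset Strict Implicit. Unset Printing Implicit Defensive.
Import GRing.Theory.
Local Open Scope ring_scope.
Definition sgnd (R : comNzRingType) (n : nat) : R :=
  \prod_(i < n) \prod_(j < n | (i < j)%N) (-1 : R).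

Lemma sgnd_sq (R : comNzRingType) n : sgnd R n * sgnd R n = 1.
Proof.
rewrite /sgnd -big_split /=; apply: big1 => i _.
rewrite -big_split /=; apply: big1 => j _; by rewrite mulrNN mulr1.
Qed.

Lemma deriv_roots (L : fieldType) (n : nat) (s : nat -> L) (i : 'I_n) :
  (\prod_(j < n) ('X - (s j)%:P))^`().[s i] =
  \prod_(j < n | j != i) (s i - s j).
Proof.
rewrite (bigD1 i) //= derivM derivXsubC mul1r !hornerE subrr mul0r addr0.
rewrite horner_prod; apply: eq_bigr => j _; by rewrite hornerXsubC.
Qed.

Lemma disc_prod (L : fieldType) (n : nat) (s : nat -> L) :
  \prod_(i < n) \prod_(j < n | (i < j)%N) (s i - s j) ^+ 2
  = sgnd L n * \prod_(i < n) (\prod_(j < n) ('X - (s j)%:P))^`().[s i].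
Proof.
under [X in _ = _ * X]eq_bigr => i _ do rewrite deriv_roots.
have E : forall i : 'I_n, \prod_(j < n | j != i) (s i - s j) =
   \prod_(j < n | (i < j)%N) (s i - s j) * \prod_(j < n | (j < i)%N) (s i - s j).
  move=> i; rewrite (bigID (fun j : 'I_n => (i < j)%N)) /=; congr (_ * _).
    by apply: eq_bigl => j; rewrite -val_eqE /=; case: ltngtP.
  by apply: eq_bigl => j; rewrite -val_eqE /=; case: ltngtP.
under [X in _ = _ * X]eq_bigr => i _ do rewrite E.
rewrite big_split /=.
have X : \prod_(i < n) \prod_(j < n | (j < i)%N) (s i - s j) =
         \prod_(i < n) \prod_(j < n | (i < j)%N) (s j - s i).
  rewrite (exchange_big_dep xpredT) //=.
rewrite X -big_split /= /sgnd -big_split /=; apply: eq_bigr => i _.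
rewrite -!big_split /=; apply: eq_bigr => j _.
rewrite -opprB; ring.
Qed.

Lemma sgnd_map (F : fieldType) (L : fieldExtType F) n :
  in_alg L (sgnd F n) = sgnd L n.
Proof.
rewrite /sgnd rmorph_prod; apply: eq_bigr => i _.
rewrite rmorph_prod; apply: eq_bigr => j _; exact: rmorphN1.
Qed.

Lemma disc_via (F : fieldType) (f : {poly F}) (m : nat) (R : F) :
  f \is monic -> size f = m.+1 -> (1 < m)%N ->
  (forall (L : fieldExtType F) (rs : seq L), size rs = m ->
     map_poly (in_alg L) f = \prod_(r <- rs) ('X - r%:P) ->
     \prod_(i < m) (map_poly (in_alg L) (f^`())).[rs`_i] = in_alg L R) ->
  (exists (L : fieldExtType F) (rs : seq L),
     map_poly (in_alg L) f = \prod_(r <- rs) ('X - r%:P)) ->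
  is_disc f (sgnd F m * R).
Proof.
move=> mon sz m1 HR [L [rs Hf]].
have szrs : size rs = m.
  have := size_map_poly (in_alg L) f; rewrite Hf size_prod_XsubC sz.
  by case.
rewrite /is_disc sz; case: eqP => [[e]|_]; first by rewrite e in m1.
exists L, rs; rewrite (monicP mon) scale1r mul1r; split => //.
rewrite /disc_roots expr1n mul1r szrs.
have Hf' : map_poly (in_alg L) f = \prod_(i < m) ('X - (rs`_i)%:P).
  by rewrite Hf (big_nth 0) big_mkord szrs.
rewrite (@disc_prod _ m (fun i => rs`_i)) -Hf' deriv_map (HR L rs szrs Hf).
by rewrite -sgnd_map -rmorphM.
Qed.
Lemma split_ex (F : finFieldType) (f : {poly F}) : f \is monic ->
  exists (L : fieldExtType F) (rs : seq L),
     map_poly (in_alg L) f = \prod_(r <- rs) ('X - r%:P).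
Proof.
move=> mon; have nz : f != 0 by apply: monic_neq0.
have [L [rs Heq _]] := FinSplittingFieldFor nz.
exists L, rs; apply/eqP; rewrite -eqp_monic //; first by rewrite map_monic.
exact: monic_prod_XsubC.
Qed.

Lemma frob_surj (F : finFieldType) p : p \in [pchar F] -> forall y : F, exists x, x ^+ p = y.
Proof.
move=> pch y.
have inj : injective (fun x : F => x ^+ p).
  by move=> x z /=; rewrite -!(pFrobenius_autE pch) => /fmorph_inj.
have [g K1 K2] := injF_bij inj; by exists (g y); exact: K2.
Qed.

Lemma eval_roots (F : fieldType) (L : fieldExtType F) (rs : seq L) f m t :
  size rs = m -> map_poly (in_alg L) f = \prod_(r <- rs) ('X - r%:P) ->
  \prod_(i < m) (in_alg L t - rs`_i) = in_alg L (f.[t]).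
Proof.
move=> sz Hf; rewrite -horner_map Hf horner_prod (big_nth 0) big_mkord sz.
by apply: eq_bigr => i _; rewrite hornerXsubC.
Qed.

Lemma prod_roots_t (F : fieldType) (L : fieldExtType F) (rs : seq L) f m t :
  size rs = m -> map_poly (in_alg L) f = \prod_(r <- rs) ('X - r%:P) ->
  \prod_(i < m) (rs`_i - in_alg L t) = (-1) ^+ m * in_alg L (f.[t]).
Proof.
move=> sz Hf; rewrite -(eval_roots t sz Hf).
under [X in _ = _ * X]eq_bigr => i _ do rewrite -opprB.
by rewrite prodrN card_ord mulrA -expr2 sqrr_sign mul1r.
Qed.

Lemma prod_roots (F : fieldType) (L : fieldExtType F) (rs : seq L) f m :
  size rs = m -> map_poly (in_alg L) f = \prod_(r <- rs) ('X - r%:P) ->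
  \prod_(i < m) rs`_i = (-1) ^+ m * in_alg L (f.[0]).
Proof.
move=> sz Hf; rewrite -(prod_roots_t 0 sz Hf).
by apply: eq_bigr => i _; rewrite rmorph0 subr0.
Qed.

Lemma monic_size_helper (F : fieldType) m (q : {poly F}) :
  (size q <= m)%N -> ('X^m + q \is monic) /\ size ('X^m + q) = m.+1.
Proof.
move=> h; have h' : (size q < size ('X^m : {poly F}))%N by rewrite size_polyXn.
split; first by apply/monicP; rewrite lead_coefDl // lead_coefXn.
by rewrite size_polyDl // size_polyXn.
Qed.

Lemma case1 (F : fieldType) p m (a : F) : p \in [pchar F] -> (p %| m)%N -> (p <= m)%N ->
  let f := 'X^m + (a *: 'X^(m - p + 1) + ((-1) ^+ m * a^-1)%:P) in
  [/\ f \is monic, size f = m.+1 &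
   forall (L : fieldExtType F) (rs : seq L), size rs = m ->
     map_poly (in_alg L) f = \prod_(r <- rs) ('X - r%:P) ->
     \prod_(i < m) (map_poly (in_alg L) (f^`())).[rs`_i] = in_alg L (a ^+ p)].
Proof.
move=> pch pm pm' f.
have p2 : (2 <= p)%N by apply: prime_gt1; exact: pcharf_prime pch.
have [mon sz] : f \is monic /\ size f = m.+1.
  apply: monic_size_helper.
  apply: leq_trans (size_polyD _ _) _; rewrite geq_max; apply/andP; split.
    apply: leq_trans (size_scale_leq _ _) _; rewrite size_polyXn; lia.
  apply: leq_trans (size_polyC_leq1 _) _; lia.
split => // L rs szrs Hf.
have fd : f^`() = a *: 'X^(m - p).
  rewrite /f !derivD derivXn derivZ derivXn derivC addr0.
  rewrite -!scaler_nat.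
  have -> : (m%:R : F) = 0 by apply/eqP; rewrite -(dvdn_pcharf pch).
  have -> : ((m - p + 1)%:R : F) = 1.
    rewrite natrD; have -> : ((m - p)%:R : F) = 0.
      by apply/eqP; rewrite -(dvdn_pcharf pch) dvdn_sub.
    by rewrite add0r.
  by rewrite scale0r add0r scale1r addn1.
rewrite fd.
under eq_bigr => i _ do rewrite map_polyZ map_polyXn hornerZ hornerXn.
rewrite big_split /= prodr_const card_ord prodrXl (prod_roots szrs Hf).
have f0 : f.[0] = (-1) ^+ m * a^-1.
  rewrite /f !hornerD hornerZ !hornerXn hornerC !expr0n.
  have -> : (m == 0)%N = false by apply/eqP; lia.
  have -> : (m - p + 1 == 0)%N = false by apply/eqP; lia.
  by rewrite mulr0 !add0r.
have key : a ^+ m * ((-1) ^+ m * ((-1) ^+ m / a)) ^+ (m - p) = a ^+ p.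
  rewrite mulrA -expr2 sqrr_sign mul1r.
  have [->|a0] := eqVneq a 0.
    rewrite invr0 !expr0n; have -> : (m == 0)%N = false by apply/eqP; lia.
    have -> : (p == 0)%N = false by apply/eqP; lia.
    by rewrite mul0r.
  rewrite exprVn -{1}(subnK pm') exprD mulrAC mulfV ?mul1r //; exact: expf_neq0.
rewrite f0 -key; transitivity (in_alg L (a ^+ m * ((-1) ^+ m * ((-1) ^+ m / a)) ^+ (m - p))); last by [].
by rewrite !(rmorphM, rmorphXn, rmorph_sign, fmorphV, rmorphN1).
Qed.

Definition K2 (F : fieldType) m p : F :=
  (m%:R) ^+ m * ((-1) ^+ m) ^+ (m - p - 1) * ((-1) ^+ m) ^+ p.

Lemma case2 (F : fieldType) p m (u : F) : p \in [pchar F] -> ~~ (p %| m)%N -> (p <= m)%N ->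
  let f := 'X^m + ('X^(m - p) + (1 - u) *: 'X^p + 1) in
  [/\ f \is monic, size f = m.+1 &
   forall (L : fieldExtType F) (rs : seq L), size rs = m ->
     map_poly (in_alg L) f = \prod_(r <- rs) ('X - r%:P) ->
     \prod_(i < m) (map_poly (in_alg L) (f^`())).[rs`_i] = in_alg L (K2 F m p * u ^+ p)].
Proof.
move=> pch pm pm' f.
have p2 : (2 <= p)%N by apply: prime_gt1; exact: pcharf_prime pch.
have mp : (p < m)%N.
  by rewrite ltn_neqAle pm' andbT; apply: contra pm => /eqP ->; rewrite dvdnn.
have [mon sz] : f \is monic /\ size f = m.+1.
  apply: monic_size_helper.
  apply: leq_trans (size_polyD _ _) _; rewrite geq_max; apply/andP; split.
    apply: leq_trans (size_polyD _ _) _; rewrite geq_max; apply/andP; split.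
      rewrite size_polyXn; lia.
    apply: leq_trans (size_scale_leq _ _) _; rewrite size_polyXn; lia.
  rewrite -polyC1; apply: leq_trans (size_polyC_leq1 _) _; lia.
split => // L rs szrs Hf.
have p0 : (p%:R : F) = 0 by exact: pcharf0.
have fd : f^`() = (m%:R : F) *: ('X^(m.-1) + 'X^((m - p).-1)).
  rewrite /f !derivD derivXn derivZ !derivXn -polyC1 derivC addr0.
  rewrite -!scaler_nat p0 scale0r scaler0 addr0 natrB // p0 subr0.
  by rewrite scalerDr.
have pchL : p \in [pchar L] by rewrite (pchar_lalg L).
have frob : forall x : L, (x + 1) ^+ p = x ^+ p + 1.
  by move=> x; rewrite -!(pFrobenius_autE pchL) rmorphD rmorph1.
have ev : forall x : L, (map_poly (in_alg L) (f^`())).[x] =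
    in_alg L (m%:R) * (x ^+ (m - p - 1) * (x + 1) ^+ p).
  move=> x; rewrite fd map_polyZ rmorphD /= !map_polyXn hornerZ hornerD !hornerXn frob.
  rewrite [in RHS]mulrDr mulr1 -exprD.
  have -> : (m - p - 1 + p = m.-1)%N by lia.
  by have -> : ((m - p).-1 = m - p - 1)%N by lia.
under eq_bigr => i _ do rewrite ev.
rewrite big_split /= prodr_const card_ord big_split /= !prodrXl (prod_roots szrs Hf).
have -> : \prod_(i < m) (rs`_i + 1) = (-1) ^+ m * in_alg L (f.[-1]).
  rewrite -(prod_roots_t (-1) szrs Hf); apply: eq_bigr => i _.
  by rewrite rmorphN1 opprK.
have n1 : (-1 : F) ^+ p = -1 by rewrite -(pFrobenius_autE pch) rmorphN1.
have f0 : f.[0] = 1.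
  rewrite /f !hornerD hornerZ !hornerXn hornerC !expr0n.
  have -> : (m == 0)%N = false by apply/eqP; lia.
  have -> : (m - p == 0)%N = false by apply/eqP; lia.
  have -> : (p == 0)%N = false by apply/eqP; lia.
  by rewrite mulr0 !add0r.
have f1 : f.[-1] = u.
  rewrite /f !hornerD hornerZ !hornerXn hornerC.
  rewrite -{1}(subnK pm') exprD n1; ring.
rewrite f0 f1.
have key : m%:R ^+ m * ((-1) ^+ m * 1) ^+ (m - p - 1) * ((-1) ^+ m * u) ^+ p
   = K2 F m p * u ^+ p.
  by rewrite /K2 mulr1 exprMn mulrA.
rewrite -key; transitivity (in_alg L (m%:R ^+ m * ((-1) ^+ m * 1) ^+ (m - p - 1) * ((-1) ^+ m * u) ^+ p)); last by [].
by rewrite !(rmorphM, rmorphXn, rmorph_sign, fmorphV, rmorphN1, rmorph1) mulrA.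
Qed.

Theorem theorem6p1 (p : nat) (F : finFieldType) (q : nat) :
  prime p -> p \in [pchar F] -> #|F| = q ->
  forall (m : nat), (p <= m)%N ->
  forall d : F, exists f : {poly F},
    f \is monic /\ size f = m.+1 /\ is_disc f d.
Proof.
move=> pr pch _ m pm d.
have p2 : (2 <= p)%N by apply: prime_gt1.
have m1 : (1 < m)%N by lia.
have sq := sgnd_sq F m.
case: (boolP (p %| m)%N) => pdm.
  have [a ha] := frob_surj pch (sgnd F m * d).
  have [mon sz H] := case1 a pch pdm pm.
  eexists; split; first exact: mon; split; first exact: sz.
  have := disc_via mon sz m1 H (split_ex mon).
  by rewrite ha mulrA sq mul1r.
have K0 : K2 F m p != 0.
  have n1 : (-1 : F) != 0 by rewrite oppr_eq0 oner_eq0.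
  have mn : (m%:R : F) != 0 by rewrite -(dvdn_pcharf pch).
  by rewrite /K2 !mulf_neq0 // !expf_neq0.
have s0 : sgnd F m != 0.
  by apply/eqP => e; move: sq; rewrite e mul0r => /eqP; rewrite eq_sym oner_eq0.
have [u hu] := frob_surj pch (d / (sgnd F m * K2 F m p)).
have [mon sz H] := case2 u pch pdm pm.
eexists; split; first exact: mon; split; first exact: sz.
have := disc_via mon sz m1 H (split_ex mon).
by rewrite hu mulrA mulrCA divff ?mulr1 // mulf_neq0.
Qed.
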